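(* Let $G$ be a discrete group, $A$ an abelian group, $\alpha\colon G^3\to A$ a normalized 3-cocycle, $\mathcal{G}=\mathcal{G}(G,A,\alpha)$, and $X$ a smooth manifold. Let $u\colon Y\to X$ be a surjective submersion, let $\rho_1,\rho_2$ be $G$-valued Čech 1-cocycles on $Y$, let $h\colon Y\to G$ be locally constant with $\rho_2(y_1,y_2)h(y_2)=h(y_1)\rho_1(y_1,y_2)$ (so that $h$ defines an isomorphism $\varphi_{Y,h}\colon P_{u,\rho_1}\to P_{u,\rho_2}$), and let $(u,\rho_1,\gamma_1)$ be a flat $\mathcal{G}$-bundle. (1) There exist a flat $\mathcal{G}$-bundle $(u,\rho_2,{}^h\gamma_1)$ and a 1-morphism $(Y,\mathrm{id}_Y,\mathrm{id}_Y,h,\eta)\colon(u,\rho_1,\gamma_1)\to(u,\rho_2,{}^h\gamma_1)$, whose underlying $G$-bundle isomorphism is $\varphi_{Y,h}$. (2) For any such ${}^h\gamma_1$, and any flat $\mathcal{G}$-bundle $(u,\rho_2,\gamma_2)$, there exists a 1-morphism $(Y,\mathrm{id}_Y,\mathrm{id}_Y,h,\eta')\colon(u,\rho_1,\gamma_1)\to(u,\rho_2,\gamma_2)$ if and only if $\gamma_2={}^h\gamma_1\cdot d\eta''$ for some locally constant $\eta''\colon Y\times_XY\to A$; in particular then $[{}^h\gamma_1/\gamma_2]=1\in\check{H}^2(X;A)$.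
   Context: $A$ carries the discrete topology; $Y^{[k]}$ denotes the $k$-fold fiber product of $Y$ over $X$. A $G$-valued Čech 1-cocycle is a locally constant $\rho\colon Y^{[2]}\to G$ with $\rho(y_1,y_3)=\rho(y_1,y_2)\rho(y_2,y_3)$; $P_{u,\rho}=(Y\times G)/((y_1,\rho(y_1,y_2)g)\sim(y_2,g))$. The Čech differential is $dc(y_1,..,y_{k+1})=\prod_i c(y_1,..,\widehat{y_i},..,y_{k+1})^{(-1)^{i-1}}$ and $\rho^*\alpha(y_1,..,y_4)=\alpha(\rho(y_1,y_2),\rho(y_2,y_3),\rho(y_3,y_4))$. A flat $\mathcal{G}$-bundle is a triple $(u,\rho,\gamma)$ with $\gamma\colon Y^{[3]}\to A$ locally constant, $d\gamma=\rho^*\alpha$, $\gamma(y_1,y_2,y_2)=\gamma(y_2,y_2,y_3)=1$. A 1-morphism $(u_1,\rho_1,\gamma_1)\to(u_2,\rho_2,\gamma_2)$ is $(Z,v_1,v_2,h,\eta)$ with $v_i\colon Z\to Y_i$, $u_1v_1=u_2v_2$ a surjective submersion, $h\colon Z\to G$, $\eta\colon Z^{[2]}\to A$ locally constant with (pullbacks along $v_i$ implicit) $\rho_2(z_1,z_2)h(z_2)=h(z_1)\rho_1(z_1,z_2)$ and $d\eta(z_1,z_2,z_3)=\frac{\gamma_1}{\gamma_2}(z_1,z_2,z_3)\cdot\frac{\alpha(\rho_2(z_1,z_2),h(z_2),\rho_1(z_2,z_3))}{\alpha(h(z_1),\rho_1(z_1,z_2),\rho_1(z_2,z_3))\alpha(\rho_2(z_1,z_2),\rho_2(z_2,z_3),h(z_3))}$.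 Its underlying $G$-bundle isomorphism is the one determined by $h$. *)

(* Defs.v *)
From HB Require Import structures.
From mathcomp Require Import all_boot all_order all_algebra.
From mathcomp Require Import boolp classical_sets topology.
Set Implicit Arguments. Unset Strict Implicit. Unset Printing Implicit Defensive.
Import GRing.Theory.
Local Open Scope classical_set_scope.
Local Open Scope ring_scope.

(* G : a (discrete, possibly infinite) group, MathComp's [groupType];
   A : an abelian group, written ADDITIVELY ([zmodType]): the paper's
   products/quotients in A become sums/differences and 1 becomes 0. *)

Definition lc_on {T : topologicalType} {V : Type} (S : set T) (f : T -> V) : Prop :=
  forall p, S p -> exists N, nbhs p N /\ forall q, N q -> S q -> f q = f p.

Definition fib2 {Y : topologicalType} {X : Type} (u : Y -> X) : set (Y * Y) :=
  [set p | u p.1 = u p.2].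
Definition fib3 {Y : topologicalType} {X : Type} (u : Y -> X) : set (Y * Y * Y) :=
  [set p | u p.1.1 = u p.1.2 /\ u p.1.2 = u p.2].

Definition lc1 {Y : topologicalType} {V : Type} (f : Y -> V) : Prop := lc_on setT f.
Definition lc2 {Y : topologicalType} {X V : Type} (u : Y -> X) (f : Y -> Y -> V) : Prop :=
  lc_on (fib2 u) (fun p => f p.1 p.2).
Definition lc3 {Y : topologicalType} {X V : Type} (u : Y -> X) (f : Y -> Y -> Y -> V) : Prop :=
  lc_on (fib3 u) (fun p => f p.1.1 p.1.2 p.2).

(* Topological surrogate for "surjective submersion": continuous, surjective,
   and admitting continuous local sections through every point of Y. *)
Definition surj_submersion {Y X : topologicalType} (u : Y -> X) : Prop :=
  [/\ continuous u,
      (forall x, exists y, u y = x) &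
      (forall y, exists (U : set X) (s : X -> Y),
          [/\ nbhs (u y) U, s (u y) = y, {within U, continuous s} &
              forall x, U x -> u (s x) = x])].

Definition normalized_3cocycle {G : groupType} {A : zmodType} (alpha : G -> G -> G -> A) : Prop :=
  (forall g1 g2 g3 g4 : G,
     alpha g2 g3 g4 - alpha (g1 * g2)%g g3 g4 + alpha g1 (g2 * g3)%g g4
       - alpha g1 g2 (g3 * g4)%g + alpha g1 g2 g3 = 0) /\
  (forall g h : G, alpha 1%g g h = 0 /\ alpha g 1%g h = 0 /\ alpha g h 1%g = 0).

Definition cech_d2 {Y : Type} {A : zmodType} (c : Y -> Y -> A) (y1 y2 y3 : Y) : A :=
  c y2 y3 - c y1 y3 + c y1 y2.
Definition cech_d3 {Y : Type} {A : zmodType} (c : Y -> Y -> Y -> A) (y1 y2 y3 y4 : Y) : A :=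
  c y2 y3 y4 - c y1 y3 y4 + c y1 y2 y4 - c y1 y2 y3.

Definition cech_1cocycle {G : groupType} {Y : topologicalType} {X : Type}
    (u : Y -> X) (rho : Y -> Y -> G) : Prop :=
  lc2 u rho /\
  forall y1 y2 y3, u y1 = u y2 -> u y2 = u y3 -> rho y1 y3 = (rho y1 y2 * rho y2 y3)%g.

Definition flat_bundle {G : groupType} {A : zmodType} (alpha : G -> G -> G -> A)
    {Y X : topologicalType} (u : Y -> X) (rho : Y -> Y -> G) (gamma : Y -> Y -> Y -> A) : Prop :=
  [/\ surj_submersion u, cech_1cocycle u rho, lc3 u gamma,
      (forall y1 y2 y3 y4, u y1 = u y2 -> u y2 = u y3 -> u y3 = u y4 ->
         cech_d3 gamma y1 y2 y3 y4 = alpha (rho y1 y2) (rho y2 y3) (rho y3 y4)) &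
      (forall y1 y2 y3, u y1 = u y2 -> u y2 = u y3 ->
         gamma y1 y2 y2 = 0 /\ gamma y2 y2 y3 = 0)].

Definition one_morphism {G : groupType} {A : zmodType} (alpha : G -> G -> G -> A)
    {Y1 Y2 Z X : topologicalType}
    (u1 : Y1 -> X) (rho1 : Y1 -> Y1 -> G) (gamma1 : Y1 -> Y1 -> Y1 -> A)
    (u2 : Y2 -> X) (rho2 : Y2 -> Y2 -> G) (gamma2 : Y2 -> Y2 -> Y2 -> A)
    (v1 : Z -> Y1) (v2 : Z -> Y2) (h : Z -> G) (eta : Z -> Z -> A) : Prop :=
  continuous v1 /\ continuous v2 /\
      (forall z, u1 (v1 z) = u2 (v2 z)) /\
      surj_submersion (u1 \o v1) /\
      lc1 h /\ lc2 (u1 \o v1) eta /\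
      (forall z1 z2, u1 (v1 z1) = u1 (v1 z2) ->
         (rho2 (v2 z1) (v2 z2) * h z2)%g = (h z1 * rho1 (v1 z1) (v1 z2))%g) /\
      (forall z1 z2 z3, u1 (v1 z1) = u1 (v1 z2) -> u1 (v1 z2) = u1 (v1 z3) ->
         cech_d2 eta z1 z2 z3 =
           gamma1 (v1 z1) (v1 z2) (v1 z3) - gamma2 (v2 z1) (v2 z2) (v2 z3)
           + alpha (rho2 (v2 z1) (v2 z2)) (h z2) (rho1 (v1 z2) (v1 z3))
           - alpha (h z1) (rho1 (v1 z1) (v1 z2)) (rho1 (v1 z2) (v1 z3))
           - alpha (rho2 (v2 z1) (v2 z2)) (rho2 (v2 z2) (v2 z3)) (h z3)).

(* Main.v *)
Require Import Defs.
From HB Require Import structures.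
From mathcomp Require Import all_boot all_order all_algebra.
From mathcomp Require Import boolp classical_sets topology.
Import GRing.Theory.
Local Open Scope ring_scope.

Inductive aexpr := AAtom of nat | AAdd of aexpr & aexpr | AOpp of aexpr | AZero.

Fixpoint aeval {A : zmodType} (env : seq A) (e : aexpr) : A :=
  match e with
  | AAtom j => nth 0 env j
  | AAdd a b => aeval env a + aeval env b
  | AOpp a => - aeval env a
  | AZero => 0
  end.

Fixpoint acoef (e : aexpr) (i : nat) : int :=
  match e with
  | AAtom j => ((i == j) : nat)%:Z
  | AAdd a b => acoef a i + acoef b i
  | AOpp a => - acoef a i
  | AZero => 0
  end.

Fixpoint abound (e : aexpr) : nat :=
  match e with
  | AAtom j => j.+1
  | AAdd a b => maxn (abound a) (abound b)
  | AOpp a => abound a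
  | AZero => 0
  end.

Lemma aeval_coef (A : zmodType) (env : seq A) e N : (abound e <= N)%N ->
  aeval env e = \sum_(i < N) env`_i *~ acoef e i.
Proof.
elim: e => [j|a IHa b IHb|a IHa|] /= hN.
- rewrite (bigD1 (Ordinal hN)) //= eqxx mulr1z big1 ?addr0 // => i hi.
  have -> : (i == j :> nat) = false.
    by apply/negbTE; apply: contra hi => /eqP hij; apply/eqP; apply: val_inj.
  by rewrite mulr0z.
- rewrite geq_max in hN; case/andP: hN => ha hb.
  rewrite IHa // IHb // -big_split /=; apply: eq_bigr => i _; by rewrite mulrzDr.
- rewrite IHa // -sumrN; apply: eq_bigr => i _; by rewrite mulrNz.
- by rewrite big1 // => i _; rewrite mulr0z.
Qed.

Lemma areflect (A : zmodType) (env : seq A) e1 e2 :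
  let N := maxn (abound e1) (abound e2) in
  [seq acoef e1 i | i <- iota 0 N] == [seq acoef e2 i | i <- iota 0 N] ->
  aeval env e1 = aeval env e2.
Proof.
move=> N /eqP H.
rewrite (@aeval_coef _ env e1 N) ?leq_maxl // (@aeval_coef _ env e2 N) ?leq_maxr //.
apply: eq_bigr => [[i hi]] _ /=.
have := congr1 (fun s => nth 0 s i) H.
by rewrite !(nth_map 0%N) ?size_iota // nth_iota // add0n => ->.
Qed.

Ltac mem_idx x l :=
  lazymatch l with
  | x :: _ => constr:(O)
  | _ :: ?l' => let n := mem_idx x l' in constr:(S n)
  end.

Ltac collect e l :=
  lazymatch e with
  | (?a + ?b)%R => let l1 := collect a l in collect b l1
  | (- ?a)%R => collect a l
  | 0%R => l
  | _ => lazymatch l with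
         | context [e] => l
         | _ => constr:(e :: l)
         end
  end.

Ltac reify e l :=
  lazymatch e with
  | (?a + ?b)%R => let x := reify a l in let y := reify b l in constr:(AAdd x y)
  | (- ?a)%R => let x := reify a l in constr:(AOpp x)
  | 0%R => constr:(AZero)
  | _ => let n := mem_idx e l in constr:(AAtom n)
  end.

Ltac zmod_eq :=
  lazymatch goal with
  | |- ?x = ?y =>
    let T := type of x in
    let l := collect x (@nil T) in
    let l := collect y l in
    let e1 := reify x l in
    let e2 := reify y l in
    change (aeval l e1 = aeval l e2); apply: areflect; vm_compute; reflexivity
  end.

Local Open Scope classical_set_scope.
Local Open Scope ring_scope.

Lemma lc_map2 {T : topologicalType} {V W Z : Type} (F : V -> W -> Z) (S : set T) (f : T -> V) (g : T -> W) : lc_on S f -> lc_on S g -> lc_on S (fun p => F (f p) (g p)).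
Proof.
move=> hf hg p Sp; have [N1 [n1 e1]] := hf p Sp; have [N2 [n2 e2]] := hg p Sp.
exists (N1 `&` N2); split; first exact: filterI.
by move=> q [q1 q2] Sq; rewrite e1 // e2.
Qed.

Lemma lc_const {T : topologicalType} {V : Type} (S : set T) (c : V) : lc_on S (fun _ => c).
Proof. move=> p _; exists setT; split => //; exact: filterT. Qed.

Lemma lc_comp {T U : topologicalType} {V : Type} (m : T -> U) (f : U -> V) (S : set T) (S' : set U) :
  continuous m -> (forall p, S p -> S' (m p)) -> lc_on S' f -> lc_on S (fun p => f (m p)).
Proof.
move=> cm hS hf p Sp; have [N [nN eN]] := hf _ (hS _ Sp).
exists (m @^-1` N); split; first exact: cm.
by move=> q Nq Sq; apply: eN => //; apply: hS.
Qed.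

Section Cont.
Variable Y : topologicalType.
Lemma cont_fst {U V : topologicalType} : continuous (@fst U V).
Proof. move=> [a b]; exact: cvg_fst. Qed.
Lemma cont_snd {U V : topologicalType} : continuous (@snd U V).
Proof. move=> [a b]; exact: cvg_snd. Qed.
Lemma cont_pair {T U V : topologicalType} (f : T -> U) (g : T -> V) :
  continuous f -> continuous g -> continuous (fun x => (f x, g x)).
Proof. move=> cf cg x; apply: cvg_pair; [exact: cf | exact: cg]. Qed.
Lemma cont_comp' {T U V : topologicalType} (f : T -> U) (g : U -> V) :
  continuous f -> continuous g -> continuous (fun x => g (f x)).
Proof. move=> cf cg x; exact: (continuous_comp (cf x) (cg (f x))). Qed.
End Cont.

Lemma comb1p {A : zmodType} {L R e : A} : e = 0 -> L - R = e -> L = R.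
Proof. by move=> -> /eqP; rewrite subr_eq0 => /eqP. Qed.
Lemma comb1n {A : zmodType} {L R e : A} : e = 0 -> L - R = - e -> L = R.
Proof. by move=> -> /eqP; rewrite oppr0 subr_eq0 => /eqP. Qed.
Lemma add0e {A : zmodType} {a b : A} : a = 0 -> b = 0 -> a + b = 0.
Proof. by move=> -> ->; rewrite addr0. Qed.
Lemma sub0e {A : zmodType} {a b : A} : a = 0 -> b = 0 -> a - b = 0.
Proof. by move=> -> ->; rewrite subr0. Qed.
Lemma eq_sub0 {A : zmodType} {a b : A} : a = b -> a - b = 0.
Proof. by move=> ->; rewrite subrr. Qed.

Ltac comb H := first [ apply: (comb1p H); zmod_eq | apply: (comb1n H); zmod_eq ].

Lemma rho_diag (G : groupType) (Y : topologicalType) (X : Type) (u : Y -> X) (rho : Y -> Y -> G) :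
  cech_1cocycle u rho -> forall y, rho y y = 1%g.
Proof.
move=> [_ cyc] y; have E := cyc y y y erefl erefl.
have := mulgK (rho y y) (rho y y); rewrite -E mulgV => <-. done.
Qed.

Section Proj.
Variables (Y : topologicalType) (X V : Type) (u : Y -> X).
Let c11 : continuous (fun p : Y * Y * Y => p.1.1) := @cont_comp' _ _ _ fst fst cont_fst cont_fst.
Let c12 : continuous (fun p : Y * Y * Y => p.1.2) := @cont_comp' _ _ _ fst snd cont_fst cont_snd.
Let c3 : continuous (fun p : Y * Y * Y => p.2) := cont_snd.
Lemma lc_12 (f : Y -> Y -> V) : lc2 u f -> lc_on (fib3 u) (fun p => f p.1.1 p.1.2).
Proof.
move=> hf; apply: (@lc_comp _ _ _ (fun p : Y * Y * Y => (p.1.1, p.1.2)) (fun q => f q.1 q.2) (fib3 u) (fib2 u) _ _ hf).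
  exact: (@cont_pair _ _ _ _ _ c11 c12).
by move=> p [] /=.
Qed.
Lemma lc_13 (f : Y -> Y -> V) : lc2 u f -> lc_on (fib3 u) (fun p => f p.1.1 p.2).
Proof.
move=> hf; apply: (@lc_comp _ _ _ (fun p : Y * Y * Y => (p.1.1, p.2)) (fun q => f q.1 q.2) (fib3 u) (fib2 u) _ _ hf).
  exact: (@cont_pair _ _ _ _ _ c11 c3).
by move=> p [e1 e2]; rewrite /fib2 /= e1 e2.
Qed.
Lemma lc_23 (f : Y -> Y -> V) : lc2 u f -> lc_on (fib3 u) (fun p => f p.1.2 p.2).
Proof.
move=> hf; apply: (@lc_comp _ _ _ (fun p : Y * Y * Y => (p.1.2, p.2)) (fun q => f q.1 q.2) (fib3 u) (fib2 u) _ _ hf).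
  exact: (@cont_pair _ _ _ _ _ c12 c3).
by move=> p [] /=.
Qed.
Lemma lc_1 (f : Y -> V) : lc1 f -> lc_on (fib3 u) (fun p => f p.1.1).
Proof. move=> hf; exact: (@lc_comp _ _ _ _ f (fib3 u) setT c11 (fun _ _ => I) hf). Qed.
Lemma lc_2 (f : Y -> V) : lc1 f -> lc_on (fib3 u) (fun p => f p.1.2).
Proof. move=> hf; exact: (@lc_comp _ _ _ _ f (fib3 u) setT c12 (fun _ _ => I) hf). Qed.
Lemma lc_3 (f : Y -> V) : lc1 f -> lc_on (fib3 u) (fun p => f p.2).
Proof. move=> hf; exact: (@lc_comp _ _ _ _ f (fib3 u) setT c3 (fun _ _ => I) hf). Qed.
End Proj.

Lemma lc_map3 {T : topologicalType} {V1 V2 V3 Z : Type} (S : set T) (f1 : T -> V1) (f2 : T -> V2)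
  (f3 : T -> V3) (F : V1 -> V2 -> V3 -> Z) :
  lc_on S f1 -> lc_on S f2 -> lc_on S f3 -> lc_on S (fun p => F (f1 p) (f2 p) (f3 p)).
Proof.
move=> h1 h2 h3.
exact: (@lc_map2 _ _ _ _ (fun ab c => F ab.1 ab.2 c) S (fun p => (f1 p, f2 p)) f3 (@lc_map2 _ _ _ _ pair S f1 f2 h1 h2) h3).
Qed.

Theorem mainTheorem8 (G : groupType) (A : zmodType) (alpha : G -> G -> G -> A)
    (X Y : topologicalType) (u : Y -> X) (rho1 rho2 : Y -> Y -> G) (h : Y -> G)
    (gamma1 : Y -> Y -> Y -> A) :
  normalized_3cocycle alpha ->
  surj_submersion u ->
  cech_1cocycle u rho1 -> cech_1cocycle u rho2 ->
  lc1 h ->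
  (forall y1 y2, u y1 = u y2 -> (rho2 y1 y2 * h y2)%g = (h y1 * rho1 y1 y2)%g) ->
  flat_bundle alpha u rho1 gamma1 ->
  (exists (hgamma1 : Y -> Y -> Y -> A) (eta : Y -> Y -> A),
      flat_bundle alpha u rho2 hgamma1 /\
      one_morphism alpha u rho1 gamma1 u rho2 hgamma1 id id h eta) /\
  (forall (hgamma1 : Y -> Y -> Y -> A) (eta : Y -> Y -> A),
      flat_bundle alpha u rho2 hgamma1 ->
      one_morphism alpha u rho1 gamma1 u rho2 hgamma1 id id h eta ->
      forall gamma2 : Y -> Y -> Y -> A,
        flat_bundle alpha u rho2 gamma2 ->
        ((exists eta' : Y -> Y -> A,
            one_morphism alpha u rho1 gamma1 u rho2 gamma2 id id h eta') <->
         (exists eta'' : Y -> Y -> A,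
            lc2 u eta'' /\
            forall y1 y2 y3, u y1 = u y2 -> u y2 = u y3 ->
              gamma2 y1 y2 y3 = hgamma1 y1 y2 y3 + cech_d2 eta'' y1 y2 y3))).
Proof.
move=> [coc norm] su c1 c2 lch Hh [_ _ lcg1 dg1 ng1].
have r1d := @rho_diag _ _ _ _ _ c1; have r2d := @rho_diag _ _ _ _ _ c2.
have [lr1 cyc1] := c1; have [lr2 cyc2] := c2.
split.
  exists (fun y1 y2 y3 => gamma1 y1 y2 y3 + alpha (rho2 y1 y2) (h y2) (rho1 y2 y3)
     - alpha (h y1) (rho1 y1 y2) (rho1 y2 y3) - alpha (rho2 y1 y2) (rho2 y2 y3) (h y3)).
  exists (fun _ _ => 0).
  split.
    split => //.
    - rewrite /lc3 /=.
      apply: (lc_map2 (fun a b => a - b)); last first.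
        apply: lc_map3; [exact: lc_12|exact: lc_23|exact: lc_3].
      apply: (lc_map2 (fun a b => a - b)); last first.
        apply: lc_map3; [exact: lc_1|exact: lc_12|exact: lc_23].
      apply: (lc_map2 (fun a b => a + b)); first exact: lcg1.
      apply: lc_map3; [exact: lc_12|exact: lc_2|exact: lc_23].
    - move=> y1 y2 y3 y4 e12 e23 e34.
      have D := eq_sub0 (dg1 y1 y2 y3 y4 e12 e23 e34).
      have d1 := (coc (h y1) (rho1 y1 y2) (rho1 y2 y3) (rho1 y3 y4)).
      have d2 := (coc (rho2 y1 y2) (rho2 y2 y3) (rho2 y3 y4) (h y4)).
      have d3 := (coc (rho2 y1 y2) (h y2) (rho1 y2 y3) (rho1 y3 y4)).
      have d4 := (coc (rho2 y1 y2) (rho2 y2 y3) (h y3) (rho1 y3 y4)).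
      rewrite (Hh y1 y2 e12) -(Hh y2 y3 e23) in d3.
      rewrite (Hh y3 y4 e34) in d2.
      rewrite /cech_d3 /= in D *.
      rewrite (cyc1 y1 y2 y3 e12 e23) (cyc1 y2 y3 y4 e23 e34)
              (cyc2 y1 y2 y3 e12 e23) (cyc2 y2 y3 y4 e23 e34).
      have E := add0e (sub0e (sub0e (add0e D d1) d2) d3) d4.
      comb E.
    - move=> y1 y2 y3 e12 e23; have [n1 n2] := ng1 y1 y2 y3 e12 e23.
      rewrite !r1d !r2d n1 n2.
      have [a1 [a2 a3]] := norm (rho2 y1 y2) (h y2).
      have [b1 [b2 b3]] := norm (h y1) (rho1 y1 y2).
      have [c1' [c2' c3']] := norm (h y2) (rho1 y2 y3).
      have [d1' [d2' d3']] := norm (rho2 y2 y3) (h y3).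
      rewrite a3 a2 b3 c1' c2' d1'.
      by split; rewrite !subr0 addr0.
  split; first by move=> x; exact: cvg_id.
  split; first by move=> x; exact: cvg_id.
  split => //; split; first exact: su.
  split => //; split; first exact: lc_const.
  split; first by move=> z1 z2; exact: Hh.
  move=> z1 z2 z3 e12 e23; rewrite /cech_d2 /=; zmod_eq.
move=> hg eta fbh [cv1 [cv2 [eu [ss [lh [leta [hc dmor]]]]]]] gamma2 fb2.
split.
  move=> [eta' [_ [_ [_ [_ [_ [leta' [_ dmor']]]]]]]].
  exists (fun y1 y2 => eta y1 y2 - eta' y1 y2); split.
    exact: (@lc_map2 _ _ _ _ (fun a b => a - b) (fib2 u) (fun p => eta p.1 p.2) (fun p => eta' p.1 p.2) leta leta').
  move=> y1 y2 y3 e12 e23.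
  have H1 := eq_sub0 (dmor y1 y2 y3 e12 e23).
  have H2 := eq_sub0 (dmor' y1 y2 y3 e12 e23).
  rewrite /cech_d2 /id in H1 H2 *.
  have E := sub0e H1 H2.
  comb E.
move=> [eta'' [lc'' eq'']].
exists (fun y1 y2 => eta y1 y2 - eta'' y1 y2).
do 5 (split => //).
split; first exact: (@lc_map2 _ _ _ _ (fun a b => a - b) (fib2 u) (fun p => eta p.1 p.2) (fun p => eta'' p.1 p.2) leta lc'').
split => //.
move=> z1 z2 z3 e12 e23.
have H1 := eq_sub0 (dmor z1 z2 z3 e12 e23).
have H2 := eq_sub0 (eq'' z1 z2 z3 e12 e23).
rewrite /cech_d2 /id in H1 H2 *.
have E := add0e H1 H2.
comb E.
Qed.
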